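(* Let $X^{2n}$ be a quasitoric manifold over a simple polytope $P^n$ and let $T^{n-1}\subset T^n$ be a subtorus such that the induced action of $T^{n-1}$ on $X^{2n}$ has connected stabilizers. Then the orbit space $Q^{n+1}=X^{2n}/T^{n-1}$ is homeomorphic to $(P^n\times S^1)/\sim$, where $(x,s_1)\sim(x,s_2)$ whenever $x\in Y_{\mathrm{non}}$.
   Context: For each facet $F$ of $P^n$, $\lambda(F)\in N=\mathrm{Hom}(T^1,T^n)\cong\mathbb{Z}^n$ is the primitive vector of the circle subgroup of $T^n$ stabilizing points of $X^{2n}$ over the interior of $F$. Let $\Pi\subset N$ be the image of $\mathrm{Hom}(T^1,T^{n-1})$. A facet $F$ is special if $\lambda(F)\in\Pi$; a proper face of $P^n$ is special if all facets containing it are special, and non-special otherwise. $Y_{\mathrm{non}}\subset\partial P^n$ is the union of all (closed) non-special faces. *)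

(* Defs.v *)
From HB Require Import structures.
From mathcomp Require Import all_boot all_order all_algebra.
From mathcomp Require Import all_classical all_reals all_analysis.
Set Implicit Arguments. Unset Strict Implicit. Unset Printing Implicit Defensive.
Import Order.TTheory GRing.Theory Num.Theory.
Import numFieldNormedType.Exports.
Local Open Scope classical_set_scope.
Local Open Scope ring_scope.

Definition eqcl {T : Type} (E : T -> T -> Prop) (x : T) : set T :=
  [set y | E x y].
Definition quot (T : topologicalType) (E : T -> T -> Prop) : Type :=
  {A : set T | exists x, A = eqcl E x}.
Definition qpi {T : topologicalType} (E : T -> T -> Prop) (x : T) : quot E :=
  exist _ (eqcl E x) (ex_intro _ x erefl).
HB.instance Definition _ (T : topologicalType) (E : T -> T -> Prop) :=
  gen_eqMixin (quot E).
HB.instance Definition _ (T : topologicalType) (E : T -> T -> Prop) :=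
  gen_choiceMixin (quot E).
Section QuotTop.
Context {T : topologicalType} (E : T -> T -> Prop).
Definition quot_open (U : set (quot E)) := open (qpi E @^-1` U).
Program Definition quot_top_mixin :=
  @isOpenTopological.Build (quot E) quot_open _ _ _.
Next Obligation. by rewrite /quot_open preimage_setT; exact: openT. Qed.
Next Obligation. by move=> ? ? ? ?; exact: openI. Qed.
Next Obligation. by move=> I f ofi; apply: bigcup_open => i _; exact: ofi. Qed.
End QuotTop.
HB.instance Definition _ (T : topologicalType) (E : T -> T -> Prop) :=
  quot_top_mixin E.

Definition homeomorphic (X Y : topologicalType) : Prop :=
  exists (f : X -> Y) (g : Y -> X),
    [/\ continuous f, continuous g, cancel f g & cancel g f].

(* Simple polytopes P = {x in R^n | <a_i, x> <= b_i, i < m}, with the *)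
(* m inequalities irredundant, so that facet i is the i-th facet.     *)
Section Polytope.
Variables (R : realType) (n m : nat).
Variables (a : 'I_m -> 'rV[R]_n) (b : 'I_m -> R).

Definition dotv (u v : 'rV[R]_n) : R := \sum_(j < n) u 0 j * v 0 j.

Definition polyP : set 'rV[R]_n := [set x | forall i, dotv (a i) x <= b i].

Definition facet (i : 'I_m) : set 'rV[R]_n :=
  [set x | polyP x /\ dotv (a i) x = b i].

(* faces: nonempty intersections of P with supporting hyperplanes
   (P itself is the improper face, c = 0, d = 0) *)
Definition is_face (G : set 'rV[R]_n) : Prop :=
  G !=set0 /\
  exists (c : 'rV[R]_n) (d : R),
    (forall x, polyP x -> dotv c x <= d) /\
    G = [set x | polyP x /\ dotv c x = d].

Definition is_vertex (v : 'rV[R]_n) : Prop := is_face [set v].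

Definition simple_polytope : Prop :=
  [/\
      exists M : R, forall x, polyP x -> forall j, `|x 0 j| <= M,
      exists x, forall i, dotv (a i) x < b i,
      (* irredundant: each inequality cuts out its own facet *)
      forall i, exists x, polyP x /\ (forall k, dotv (a k) x = b k <-> k = i)
    &
      forall v, is_vertex v -> #|[set i | v \in facet i]| = n ].

Definition vR (z : 'rV[int]_n) : 'rV[R]_n := map_mx (fun k : int => k%:~R) z.

Definition char_fun (lam : 'I_m -> 'rV[int]_n) : Prop :=
  forall v, is_vertex v ->
    exists (M : 'M[int]_n) (f : 'I_n -> 'I_m),
      [/\ \det M \is a GRing.unit, injective f,
          forall k, row k M = lam (f k),
          forall k, v \in facet (f k)
        & forall i, v \in facet i -> exists k, f k = i].

Definition latticeZ : set 'rV[R]_n := [set v | exists z, v = vR z].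
Definition torusE (s t : 'rV[R]_n) : Prop := latticeZ (s - t).
Definition torus := @quot 'rV[R]_n torusE.
Definition tpi (s : 'rV[R]_n) : torus := qpi torusE s.

(* Lie algebra of the subtorus T(F(x)) generated by the circles lambda(F_i),
   F_i ranging over the facets containing x *)
Definition spanF (lam : 'I_m -> 'rV[int]_n) (x : 'rV[R]_n) : set 'rV[R]_n :=
  [set v | exists c : 'I_m -> R,
           v = \sum_(i < m | x \in facet i) c i *: vR (lam i)].

(* The quasitoric manifold X = P x T^n / ~ (Davis-Januszkiewicz model):
   (x,t) ~ (x',t') iff x = x' and t - t' lies in the subtorus T(F(x)). *)
Definition PT := (set_type polyP * torus)%type.
Definition relX (lam : 'I_m -> 'rV[int]_n) (p q : PT) : Prop :=
  set_val p.1 = set_val q.1 /\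
  exists s t, [/\ tpi s = p.2, tpi t = q.2 & spanF lam (set_val p.1) (s - t)].
Definition qtmanifold (lam : 'I_m -> 'rV[int]_n) := @quot PT (relX lam).
Definition xpi (lam : 'I_m -> 'rV[int]_n) (x : set_type polyP) (s : 'rV[R]_n)
  : qtmanifold lam := qpi (relX lam) (x, tpi s).

(* A subtorus T^{n-1} of T^n: it is the image of R^{n-1} -> R^n -> T^n,
   c |-> c *m B, for an integer matrix B of rank n-1; as a group,
   T^{n-1} = R^{n-1} / {c | c *m B in Z^n}. *)
Definition intmx (k l : nat) (B : 'M[int]_(k, l)) : 'M[R]_(k, l) :=
  map_mx (fun z : int => z%:~R) B.
Definition subtorusE (B : 'M[int]_(n.-1, n)) (c d : 'rV[R]_(n.-1)) : Prop :=
  latticeZ ((c - d) *m intmx B).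
Definition subtorus (B : 'M[int]_(n.-1, n)) := @quot 'rV[R]_(n.-1) (subtorusE B).
Definition spi (B : 'M[int]_(n.-1, n)) (c : 'rV[R]_(n.-1)) : subtorus B :=
  qpi (subtorusE B) c.

(* the (restricted) action of T^{n-1} on X: [x, t] . [c] = [x, t + cB] *)
Definition stabilizer (lam : 'I_m -> 'rV[int]_n) (B : 'M[int]_(n.-1, n))
  (p : qtmanifold lam) : set (subtorus B) :=
  [set g | exists c x s,
     [/\ g = spi B c, p = xpi lam x s & p = xpi lam x (s + c *m intmx B)]].

Definition connected_stabilizers (lam : 'I_m -> 'rV[int]_n)
  (B : 'M[int]_(n.-1, n)) : Prop :=
  forall p : qtmanifold lam, connected (@stabilizer lam B p).

Definition orbitE (lam : 'I_m -> 'rV[int]_n) (B : 'M[int]_(n.-1, n))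
  (p q : qtmanifold lam) : Prop :=
  exists c x s, p = xpi lam x s /\ q = xpi lam x (s + c *m intmx B).
Definition orbit_space (lam : 'I_m -> 'rV[int]_n) (B : 'M[int]_(n.-1, n)) :=
  @quot (qtmanifold lam) (@orbitE lam B).

Definition special_facet (lam : 'I_m -> 'rV[int]_n) (B : 'M[int]_(n.-1, n))
  (i : 'I_m) : Prop :=
  (* lambda(F_i) lies in Pi = integer points of the real span of the rows of B,
     i.e. the image of Hom(T^1, T^{n-1}) in N = Z^n *)
  exists y : 'rV[R]_(n.-1), vR (lam i) = y *m intmx B.

Definition special_face (lam : 'I_m -> 'rV[int]_n) (B : 'M[int]_(n.-1, n))
  (G : set 'rV[R]_n) : Prop :=
  forall i, G `<=` facet i -> special_facet lam B i.

Definition Ynon (lam : 'I_m -> 'rV[int]_n) (B : 'M[int]_(n.-1, n)) :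
  set 'rV[R]_n :=
  [set x | exists G, [/\ is_face G, G <> polyP, ~ special_face lam B G & G x]].

Definition circle : set (R * R)%type := [set v | v.1 ^+ 2 + v.2 ^+ 2 = 1].
Definition PS := (set_type polyP * set_type circle)%type.
Definition relY (lam : 'I_m -> 'rV[int]_n) (B : 'M[int]_(n.-1, n))
  (p q : PS) : Prop :=
  set_val p.1 = set_val q.1 /\ (p.2 = q.2 \/ Ynon lam B (set_val p.1)).
Definition pinched (lam : 'I_m -> 'rV[int]_n) (B : 'M[int]_(n.-1, n)) :=
  @quot PS (relY lam B).

End Polytope.

(* Main.v *)
Require Import Defs.
From HB Require Import structures.
From mathcomp Require Import all_boot all_order all_algebra.
From mathcomp Require Import all_classical all_reals all_analysis.
From mathcomp Require Import ring lra.
Import Order.TTheory GRing.Theory Num.Theory.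
Import numFieldNormedType.Exports.
Local Open Scope classical_set_scope.
Local Open Scope ring_scope.
Set Implicit Arguments. Unset Strict Implicit. Unset Printing Implicit Defensive.


Lemma pair_cont (A B C : topologicalType) (g : B -> C) :
  continuous g -> continuous (fun p : A * B => (p.1, g p.2)).
Proof.
move=> cg [x y]; apply: cvg_pair => /=.
  exact: cvg_fst.
apply: (@continuous_comp _ _ _ snd g (x, y)); last exact: cg.
exact: (@cvg_snd A B (nbhs x) (nbhs y) _).
Qed.

Section QuotGen.
Context {T : topologicalType} (E : T -> T -> Prop).

Lemma qpi_surj (q : quot E) : exists x, q = qpi E x.
Proof.
case: q => A [x hx]; exists x; rewrite /qpi; move: (ex_intro _ _ _) => p.
subst A; congr exist; exact: Prop_irrelevance.
Qed.

Lemma qpi_cont : continuous (qpi E).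
Proof. by apply/continuousP => U oU; exact: oU. Qed.

Hypothesis Erefl : forall x, E x x.

Lemma qpi_inv x y : qpi E x = qpi E y -> E x y.
Proof.
move=> h; have /= e := congr1 sval h.
have : eqcl E y y by exact: Erefl.
by rewrite -e.
Qed.

Hypothesis Esym : forall x y, E x y -> E y x.
Hypothesis Etrans : forall x y z, E x y -> E y z -> E x z.

Lemma qpi_eq x y : E x y -> qpi E x = qpi E y.
Proof.
move=> h; rewrite /qpi; move: (ex_intro _ _ _) (ex_intro _ _ _) => p1 p2.
have e : eqcl E x = eqcl E y.
  apply/seteqP; split => z /=; rewrite /eqcl /=.
    by move=> hz; apply: Etrans (Esym h) hz.
  by move=> hz; apply: Etrans h hz.
move: p1 p2; rewrite e => p1 p2; congr exist; exact: Prop_irrelevance.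
Qed.

Definition qrep (q : quot E) : T := sval (cid (svalP q)).

Lemma qrepP x : E x (qrep (qpi E x)).
Proof.
rewrite /qrep; case: (cid _) => y /= hy.
have : eqcl E y y by exact: Erefl.
by rewrite -hy.
Qed.

Variable (Y : topologicalType) (f : T -> Y).
Hypothesis finv : forall x y, E x y -> f x = f y.
Definition qlift (q : quot E) : Y := f (qrep q).
Lemma qliftE x : qlift (qpi E x) = f x.
Proof. by rewrite /qlift -(finv (qrepP x)). Qed.
Hypothesis fcont : continuous f.
Lemma qlift_cont : continuous qlift.
Proof.
apply/continuousP => U oU.
have -> : qlift @^-1` U = qlift @^-1` U by [].
rewrite /open /=.
have e : qpi E @^-1` (qlift @^-1` U) = f @^-1` U.
  by apply/seteqP; split => x /=; rewrite qliftE.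
change (open (qpi E @^-1` (qlift @^-1` U))); rewrite e.
by move/continuousP: fcont; apply.
Qed.
End QuotGen.


Section Lin.
Variables (R : realType) (n : nat) (B : 'M[int]_(n, n.+1)) (Ui : 'M[int]_n.+1)
  (v0 : 'rV[int]_n.+1).
Hypothesis hcol : forall i, (B *m Ui) i ord_max = 0.
Hypothesis hv : (v0 *m Ui) 0 ord_max = 1.
Hypothesis hrk : \rank (intmx R B) = n.

Definition kap (u : 'rV[R]_n.+1) : R := (u *m intmx R Ui) 0 ord_max.

Lemma kapD u v : kap (u + v) = kap u + kap v.
Proof. by rewrite /kap mulmxDl mxE. Qed.
Lemma kapN u : kap (- u) = - kap u.
Proof. by rewrite /kap mulNmx mxE. Qed.
Lemma kapB u v : kap (u - v) = kap u - kap v.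
Proof. by rewrite kapD kapN. Qed.
Lemma kapZ k u : kap (k *: u) = k * kap u.
Proof. by rewrite /kap -scalemxAl mxE. Qed.
Lemma kapB0 c : kap (c *m intmx R B) = 0.
Proof.
rewrite /kap -mulmxA /intmx -map_mxM mxE big1 // => i _.
by rewrite mxE hcol mulr0.
Qed.
Lemma kap_int z : kap (vR R z) = ((z *m Ui) 0 ord_max)%:~R.
Proof. by rewrite /kap /vR /intmx -map_mxM mxE. Qed.
Lemma kapv : kap (vR R v0) = 1.
Proof. by rewrite kap_int hv. Qed.

Lemma kap0 u : kap u = 0 -> exists c, u = c *m intmx R B.
Proof.
move=> h.
pose c := col ord_max (intmx R Ui).
have kc w : (w *m c) 0 0 = kap w.
  by rewrite /kap !mxE; apply: eq_bigr => k _; rewrite mxE.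
have Bc : intmx R B *m c = 0.
  apply/matrixP => i j; rewrite ord1 [RHS]mxE.
  have := kapB0 (delta_mx 0 i); rewrite -(kc) -rowE -row_mul.
  by rewrite [row _ _ _ _]mxE.
have Bk : (intmx R B <= kermx c)%MS by apply/sub_kermxP.
have c0 : c != 0.
  apply/negP => /eqP c0; have := kc (vR R v0); rewrite c0 mulmx0 mxE kapv.
  by move/eqP; rewrite eq_sym oner_eq0.
have rc : \rank c = 1%N.
  apply/eqP; rewrite eqn_leq rank_leq_col lt0n mxrank_eq0 c0 //.
have rk : \rank (kermx c) = n by rewrite mxrank_ker rc subn1.
have kB : (kermx c <= intmx R B)%MS.
  have := mxrank_leqif_sup Bk; rewrite hrk rk => -[_].
  by rewrite eqxx => <-.
have uk : (u <= kermx c)%MS.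
  apply/sub_kermxP; apply/matrixP => i j; rewrite !ord1 kc h mxE //.
have /submxP [D ->] := submx_trans uk kB.
by exists D.
Qed.

Lemma vRZ (k : int) (z : 'rV[int]_n.+1) : vR R (k *: z) = k%:~R *: vR R z.
Proof. by apply/matrixP => i j; rewrite !mxE intrM. Qed.
End Lin.


Section Circ.
Variable R : realType.
Definition tau : R := pi *+ 2.
Lemma tau_neq0 : tau != 0.
Proof. by rewrite /tau mulrn_eq0 /= gt_eqF // pi_gt0. Qed.

Definition ecirc (t : R) : set_type (@circle R) :=
  exist _ (cos t, sin t) (mem_set (cos2Dsin2 t)).

Lemma cosZ (x : R) (k : int) : cos (x + k%:~R * tau) = cos x.
Proof.
case: k => j.
  have -> : (Posz j)%:~R = j%:R :> R by [].
  by rewrite mulr_natl /tau periodicn //; exact: cosD2pi.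
rewrite NegzE intrN.
have -> : (Posz j.+1)%:~R = j.+1%:R :> R by [].
rewrite mulNr mulr_natl /tau.
set y := x - _.
have -> : x = y + pi *+ 2 *+ j.+1 by rewrite /y subrK.
by rewrite periodicn ?subrK //; exact: cosD2pi.
Qed.

Lemma sinZ (x : R) (k : int) : sin (x + k%:~R * tau) = sin x.
Proof.
case: k => j.
  have -> : (Posz j)%:~R = j%:R :> R by [].
  by rewrite mulr_natl /tau periodicn //; exact: sinD2pi.
rewrite NegzE intrN.
have -> : (Posz j.+1)%:~R = j.+1%:R :> R by [].
rewrite mulNr mulr_natl /tau.
set y := x - _.
have -> : x = y + pi *+ 2 *+ j.+1 by rewrite /y subrK.
by rewrite periodicn ?subrK //; exact: sinD2pi.
Qed.

Lemma ecircZ (x : R) (k : int) : ecirc (x + k%:~R * tau) = ecirc x.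
Proof. by apply: val_inj => /=; rewrite cosZ sinZ. Qed.

Lemma cos1_int (d : R) : cos d = 1 -> exists k : int, d = k%:~R * tau.
Proof.
move=> h.
have tp : 0 < tau by rewrite /tau mulrn_wgt0 // pi_gt0.
pose k := Num.floor (d / tau); exists k.
pose r := d - k%:~R * tau.
have hr : cos r = 1 by rewrite /r -mulNr -intrN cosZ.
have /andP[r0 r1] : 0 <= r < tau.
  have /andP[f1 f2] := floor_itv (d / tau).
  rewrite /r subr_ge0 ltrBlDl -ler_pdivlMr // f1 /=.
  have e : d = (d / tau) * tau by rewrite divfK // tau_neq0.
  rewrite {1}e -[X in _ + X]mul1r -mulrDl ltr_pM2r //.
  by rewrite intrD in f2.
suff : r = 0 by move/eqP; rewrite subr_eq0 => /eqP.
have pi0 := pi_ge0 R.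
case: (leP r pi) => rp.
  apply: (@cos_inj R); rewrite ?cos0 //; rewrite in_itv /= ?lexx //=.
  by rewrite r0 rp.
exfalso.
have : cos (tau - r) = 1.
  by rewrite addrC /tau cosD2pi cosN.
rewrite -(cos0 R) => e.
have := @cos_inj R (tau - r) 0; rewrite !in_itv /= lexx pi0 => /(_ _ isT e).
have -> : (0 <= tau - r <= pi) = true.
  by move: r1; rewrite /tau mulr2n => r1; apply/andP; split; lra.
by move=> /(_ isT) /eqP; rewrite subr_eq0 => /eqP rt; move: r1; rewrite rt ltxx.
Qed.

Lemma ecirc_inj (x y : R) : ecirc x = ecirc y -> exists k : int, x - y = k%:~R * tau.
Proof.
move=> /(congr1 val) /= [hc hs]; apply: cos1_int.
rewrite cosD cosN sinN hc hs mulrN opprK -!expr2; exact: cos2Dsin2.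
Qed.

Definition alpha1 (p : R * R) : R := atan (p.2 / (1 + p.1)) + atan (p.2 / (1 + p.1)).

Lemma alpha1E (p : R * R) : circle p -> 1 + p.1 != 0 ->
  cos (alpha1 p) = p.1 /\ sin (alpha1 p) = p.2.
Proof.
case: p => x y /=; rewrite /circle /= => hc hx.
have hy : y ^+ 2 = 1 - x ^+ 2 by rewrite -hc addrC addKr.
rewrite /alpha1 /=; set u := y / (1 + x); set t := atan u.
have c0 : 0 < cos t by apply: cos_gt0_pihalf; rewrite atan_gtNpi2 atan_ltpi2.
have st : sin t = u * cos t.
  by have := atanK u; rewrite /tan -/t => <-; rewrite divfK // gt_eqF.
have cs := cos2Dsin2 t.
have u2 : 1 + u ^+ 2 = 2 / (1 + x) by rewrite /u expr_div_n hy; field.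
have c2 : cos t ^+ 2 = (1 + x) / 2.
  have e : cos t ^+ 2 * (1 + u ^+ 2) = 1 by rewrite -[RHS]cs st; ring.
  rewrite u2 in e.
  have -> : cos t ^+ 2 = (cos t ^+ 2 * (2 / (1 + x))) * ((1 + x) / 2) by field.
  by rewrite e mul1r.
split.
  rewrite cosD st.
  have -> : cos t * cos t - u * cos t * (u * cos t) = cos t ^+ 2 * (1 - u ^+ 2) by ring.
  by rewrite c2 /u expr_div_n hy; field.
rewrite sinD st.
have -> : u * cos t * cos t + cos t * (u * cos t) = 2 * u * cos t ^+ 2 by ring.
by rewrite c2 /u; field.
Qed.

Definition ang (w : set_type (@circle R)) : R :=
  if (val w).1 == -1 then pi else alpha1 (val w).

Lemma angE w : ecirc (ang w) = w.
Proof.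
apply: val_inj; case: w => [[x y] hw] /=; have hc := set_mem hw.
rewrite /ang /=; case: eqP => [ex|hx].
  have : y ^+ 2 = 0 by move: hc; rewrite /circle /= ex sqrrN expr1n => hc'; lra.
  rewrite ex.
  by move/eqP; rewrite expf_eq0 /= => /eqP ->; rewrite cospi sinpi.
have [] := @alpha1E (x, y) hc.
  by rewrite addrC addr_eq0; apply/eqP.
by move=> -> ->.
Qed.

Lemma alpha2E (w : set_type (@circle R)) : (val w).1 != 1 ->
  ecirc (alpha1 (- val w) + pi) = w.
Proof.
move=> h; apply: val_inj; case: w h => [[x y] hw] /= h; have hc := set_mem hw.
have hc' : circle (- (x, y)).
  by move: hc; rewrite /circle /= => <-; ring.
have hx' : 1 + (- (x, y)).1 != 0 by rewrite /= subr_eq0 eq_sym.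
have [e1 e2] := alpha1E hc' hx'.
by rewrite cosDpi sinDpi e1 e2 /= !opprK.
Qed.
End Circ.


Lemma cont_into_sub (X Z : topologicalType) (A : set Z) (f : X -> set_type A) :
  continuous (fun x => set_val (f x)) -> continuous f.
Proof.
move=> cf; apply/continuousP => U [V oV <-].
by move/continuousP: cf; apply.
Qed.

Lemma open_sub (Z : topologicalType) (A : set Z) (V : set Z) :
  open V -> open (set_val @^-1` V : set (set_type A)).
Proof. by move=> oV; exists V. Qed.

Lemma cont_loc (X Y : topologicalType) (f g : X -> Y) (x : X) (S : set X) :
  open S -> S x -> (forall y, S y -> f y = g y) ->
  {for x, continuous g} -> {for x, continuous f}.
Proof.
move=> oS Sx e cg.
have nS : nbhs x S by apply: open_nbhs_nbhs; split.
have ne : \forall y \near x, g y = f y.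
  by apply: filterS nS => y Sy; exact/esym/e.
change (f @ x --> f x); rewrite (e x Sx).
exact: cvg_trans (near_eq_cvg ne) cg.
Qed.

Lemma fst_cont (A B : topologicalType) : continuous (@fst A B).
Proof. move=> [x y]; exact: (@cvg_fst A B (nbhs x) (nbhs y) _). Qed.
Lemma snd_cont (A B : topologicalType) : continuous (@snd A B).
Proof. move=> [x y]; exact: (@cvg_snd A B (nbhs x) (nbhs y) _). Qed.

Section Cont.
Variable R : realType.

Lemma cont_rowmul k l (M : 'M[R]_(k, l)) j :
  continuous (fun u : 'rV[R]_k => (u *m M) 0 j).
Proof.
have -> : (fun u : 'rV[R]_k => (u *m M) 0 j) =
  (fun u => \sum_(i <- index_enum 'I_k) u 0 i * M i j).
  by apply/funext => u; rewrite mxE.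
elim: (index_enum _) => [|i s IH] u.
  have -> : (fun u : 'rV[R]_k => \sum_(i <- [::]) u 0 i * M i j) = fun=> 0.
    by apply/funext => w; rewrite big_nil.
  exact: cst_continuous.
have -> : (fun u : 'rV[R]_k => \sum_(i0 <- i :: s) u 0 i0 * M i0 j) =
  ((fun u : 'rV[R]_k => u 0 i) \* (fun=> M i j)) + (fun u => \sum_(i0 <- s) u 0 i0 * M i0 j).
  by apply/funext => w; rewrite big_cons.
apply: continuousD; last exact: IH.
apply: continuousM; last exact: cst_continuous.
exact: coord_continuous.
Qed.

Lemma alpha1_cont (p : R * R) : 1 + p.1 != 0 -> {for p, continuous (@alpha1 R)}.
Proof.
move=> hp.
have c0 : {for p, continuous (fun q : R * R => q.2 / (1 + q.1))}.
  have -> : (fun q : R * R => q.2 / (1 + q.1)) =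
    (@snd R R) \* (fun q => (((fun=> 1) + @fst R R) q)^-1).
    by apply/funext.
  apply: continuousM; first exact: snd_cont.
  apply: continuousV => //; apply: continuousD; first exact: cst_continuous.
  exact: fst_cont.
have c1 : {for p, continuous (fun q : R * R => atan (q.2 / (1 + q.1)))}.
  apply: (@continuous_comp _ _ _ (fun q : R * R => q.2 / (1 + q.1)) atan) => //.
  exact: continuous_atan.
have -> : @alpha1 R = (fun q : R * R => atan (q.2 / (1 + q.1))) + (fun q : R * R => atan (q.2 / (1 + q.1))).
  by apply/funext.
exact: continuousD.
Qed.

Lemma open_fst_neq (A : set (R * R)) (c : R) :
  open [set w : set_type A | (set_val w).1 != c].
Proof.
apply: (@open_sub _ A [set p : R * R | p.1 != c]).
exact: (proj1 (continuousP _) (@fst_cont R R) _ (@open_neq R c)).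
Qed.
End Cont.


Lemma subr_shuffle (V : zmodType) (s t t' s' : V) :
  s - (t' + (t - s')) = (s - t) + (s' - t').
Proof. by rewrite opprD opprB [s' - t']addrC addrA (addrC s') addrA [RHS]addrA (addrAC s). Qed.

Section Tor.
Variables (R : realType) (k : nat).
Lemma vR0 : vR R (0 : 'rV[int]_k) = 0.
Proof. by apply/matrixP => i j; rewrite !mxE. Qed.
Lemma vRN (z : 'rV[int]_k) : vR R (- z) = - vR R z.
Proof. by apply/matrixP => i j; rewrite !mxE intrN. Qed.
Lemma vRD (z w : 'rV[int]_k) : vR R (z + w) = vR R z + vR R w.
Proof. by apply/matrixP => i j; rewrite !mxE intrD. Qed.

Lemma torusE_refl (s : 'rV[R]_k) : torusE s s.
Proof. by exists 0; rewrite subrr vR0. Qed.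
Lemma torusE_sym (s t : 'rV[R]_k) : torusE s t -> torusE t s.
Proof. by case=> z e; exists (- z); rewrite vRN -e opprB. Qed.
Lemma torusE_trans (s t u : 'rV[R]_k) : torusE s t -> torusE t u -> torusE s u.
Proof.
by case=> z e [w f]; exists (z + w); rewrite vRD -e -f addrA subrK.
Qed.
Lemma tpi_eq (s t : 'rV[R]_k) : torusE s t -> tpi s = tpi t.
Proof. exact: (@qpi_eq _ (@torusE R k) (@torusE_sym) (@torusE_trans)). Qed.
Lemma tpi_inv (s t : 'rV[R]_k) : tpi s = tpi t -> torusE s t.
Proof. exact: (@qpi_inv _ (@torusE R k) (@torusE_refl)). Qed.
Lemma tpi_surj (q : torus R k) : exists s, q = tpi s.
Proof. exact: qpi_surj. Qed.
Lemma tpi_shift (s t u : 'rV[R]_k) : tpi s = tpi t -> tpi (s + u) = tpi (t + u).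
Proof.
move/tpi_inv => [z e]; apply: tpi_eq; exists z.
by rewrite -e opprD addrACA subrr addr0.
Qed.
End Tor.

Section Main.
Variables (R : realType) (n m : nat) (a : 'I_m -> 'rV[R]_n.+1) (b : 'I_m -> R)
  (lam : 'I_m -> 'rV[int]_n.+1) (B : 'M[int]_(n, n.+1)) (Ui : 'M[int]_n.+1)
  (v0 : 'rV[int]_n.+1).
Hypothesis hcol : forall i, (B *m Ui) i ord_max = 0.
Hypothesis hv : (v0 *m Ui) 0 ord_max = 1.
Hypothesis hrk : \rank (intmx R B) = n.
Hypothesis hint : exists x0, forall i, dotv (a i) x0 < b i.

Notation span := (spanF a b lam).
Notation kp := (@kap R n Ui).

Lemma span0 x : span x 0.
Proof. by exists (fun=> 0); rewrite big1 // => i _; rewrite scale0r. Qed.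
Lemma spanN x v : span x v -> span x (- v).
Proof.
case=> c ->; exists (fun i => - c i); rewrite -sumrN.
by apply: eq_bigr => i _; rewrite scaleNr.
Qed.
Lemma spanD x v w : span x v -> span x w -> span x (v + w).
Proof.
case=> c -> [c' ->]; exists (fun i => c i + c' i); rewrite -big_split.
by apply: eq_bigr => i _; rewrite scalerDl.
Qed.
Lemma spanB x v w : span x v -> span x w -> span x (v - w).
Proof. by move=> h1 h2; apply: spanD => //; exact: spanN. Qed.
Lemma span_facet x i k : x \in facet a b i -> span x (k *: vR R (lam i)).
Proof.
move=> hi; exists (fun j => if j == i then k else 0).
rewrite (bigD1 i) //= eqxx big1 ?addr0 // => j /andP[_ /negPf ->].
by rewrite scale0r.
Qed.
Lemma span_kap x v : (forall i, x \in facet a b i -> special_facet R lam B i) ->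
  span x v -> kp v = 0.
Proof.
move=> hs [c ->].
rewrite /kap mulmx_suml summxE big1 // => i hi.
have [y hy] := hs i hi.
by rewrite -scalemxAl mxE -/(kap Ui _) hy (kapB0 hcol) mulr0.
Qed.

Lemma Ynon_facet x : Ynon a b lam B x -> exists i, x \in facet a b i /\ ~ special_facet R lam B i.
Proof.
case=> G [_ _ hG Gx].
have [i /not_implyP [Gi ns]] : exists i, ~ (G `<=` facet a b i -> special_facet R lam B i).
  by apply/existsNP => h; apply: hG => i; exact: h.
by exists i; split => //; apply/mem_set; exact: Gi.
Qed.

Lemma facet_Ynon x i : x \in facet a b i -> ~ special_facet R lam B i -> Ynon a b lam B x.
Proof.
move=> /set_mem hx ns; exists (facet a b i); split => //.
- split; first by exists x.
  exists (a i), (b i); split; first by move=> y; exact.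
  by [].
- have [x0 h0] := hint => e.
  have : facet a b i x0 by rewrite e => j; exact/ltW.
  by case=> _ /eqP; rewrite lt_eqF.
- by move=> /(_ i (@subset_refl _ _)).
Qed.

Lemma nYnon_special x : ~ Ynon a b lam B x ->
  forall i, x \in facet a b i -> special_facet R lam B i.
Proof.
move=> h i hi; apply/not_notP => ns; exact: h (facet_Ynon hi ns).
Qed.

Notation PTT := (PT a b).
Lemma relX_refl (p : PTT) : relX lam p p.
Proof.
case: p => x q; have [s ->] := tpi_surj q.
by split => //; exists s, s; split => //; rewrite subrr; exact: span0.
Qed.
Lemma relX_sym (p q : PTT) : relX lam p q -> relX lam q p.
Proof.
case=> e [s [t [hs ht hst]]]; split => //; exists t, s; split => //.
by rewrite -e -opprB; exact: spanN.
Qed.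
Lemma relX_trans (p q r : PTT) : relX lam p q -> relX lam q r -> relX lam p r.
Proof.
case=> e [s [t [hs ht hst]]] [e' [s' [t' [hs' ht' hst']]]].
split; first by rewrite e.
exists s, (t' + (t - s')); split => //.
  rewrite -ht'; apply: tpi_eq.
  have [z hz] : torusE t s' by apply: tpi_inv; rewrite ht hs'.
  by exists z; rewrite addrC addKr.
rewrite subr_shuffle; apply: spanD => //; by rewrite e.
Qed.

Notation XX := (qtmanifold a b lam).
Notation xp := (xpi lam).
Notation PP := (set_type (Defs.polyP a b)).

Lemma xpi_surj (q : XX) : exists x s, q = xp x s.
Proof.
have [[x t] ->] := qpi_surj q; have [s ->] := tpi_surj t.
by exists x, s.
Qed.
Lemma xpi_tpi (x : PP) s t : tpi s = tpi t -> xp x s = xp x t.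
Proof. by rewrite /xpi => ->. Qed.
Lemma xpi_span (x : PP) s t : span (set_val x) (s - t) -> xp x s = xp x t.
Proof.
move=> h; apply: (qpi_eq (@relX_sym) (@relX_trans)).
by split => //; exists s, t.
Qed.
Lemma xpi_inv (x y : PP) s t : xp x s = xp y t ->
  x = y /\ exists s' t', [/\ tpi s' = tpi s, tpi t' = tpi t & span (set_val x) (s' - t')].
Proof.
move/(qpi_inv (@relX_refl)) => [/= e [s' [t' [h1 h2 h3]]]].
by split; [exact: val_inj | exists s', t'].
Qed.

Notation BB := (intmx R B).
Notation OE := (@Defs.orbitE R n.+1 m a b lam B).

Lemma OE_refl p : OE p p.
Proof.
have [x [s ->]] := xpi_surj p.
by exists 0, x, s; rewrite mul0mx addr0.
Qed.
Lemma OE_sym p q : OE p q -> OE q p.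
Proof.
case=> c [x [s [-> ->]]]; exists (- c), x, (s + c *m BB); split => //.
by rewrite mulNmx addrK.
Qed.
Lemma OE_trans p q r : OE p q -> OE q r -> OE p r.
Proof.
case=> c [x [s [-> e1]]] [c' [y [s' [e2 ->]]]].
have [exy [s1 [t1 [h1 h2 h3]]]] := xpi_inv (etrans (esym e1) e2).
subst y; exists (c + c'), x, s; split => //.
rewrite mulmxDl addrA.
rewrite (xpi_tpi _ (tpi_shift _ (esym h2))).
rewrite -(xpi_tpi _ (tpi_shift _ h1)).
apply: xpi_span; rewrite opprD addrACA subrr addr0 -opprB.
exact: spanN.
Qed.

Notation QQ := (orbit_space a b lam B).
Notation qO := (qpi OE).

Notation PSS := (PS a b).
Notation YE := (@relY R n.+1 m a b lam B).
Lemma YE_refl p : YE p p.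
Proof. by split => //; left. Qed.
Lemma YE_sym p q : YE p q -> YE q p.
Proof. by case=> e [h|h]; split => //; [left | right; rewrite -e]. Qed.
Lemma YE_trans p q r : YE p q -> YE q r -> YE p r.
Proof.
case=> e h [e' h']; split; first by rewrite e.
case: h => [h|h]; last by right.
case: h' => [h'|h']; first by left; rewrite h.
by right; rewrite e.
Qed.

Definition f0 (s : 'rV[R]_n.+1) : set_type (@circle R) := ecirc (kp s * (tau R)).

Lemma kp_cont : continuous kp.
Proof. exact: (@cont_rowmul R _ _ (intmx R Ui) ord_max). Qed.

Lemma f0_cont : continuous f0.
Proof.
apply: cont_into_sub => s /=.
have ck : {for s, continuous (fun s => kp s * (tau R))}.
  exact: (continuousM (@kp_cont s) (@cst_continuous _ _ (tau R) s)).
change ((fun x => (cos (kp x * tau R), sin (kp x * tau R))) @ s -->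
  (cos (kp s * tau R), sin (kp s * tau R))).
have c1 := @continuous_comp _ _ _ (fun s => kp s * (tau R)) cos s ck (@continuous_cos R _).
have c2 := @continuous_comp _ _ _ (fun s => kp s * (tau R)) sin s ck (@continuous_sin R _).
exact: (cvg_pair c1 c2).
Qed.

Lemma f0_tor s t : torusE s t -> f0 s = f0 t.
Proof.
case=> z e; rewrite /f0.
have -> : kp s = kp t + ((z *m Ui) 0 ord_max)%:~R.
  by rewrite -kap_int -e kapB addrC subrK.
by rewrite mulrDl ecircZ.
Qed.

Definition f1 := qlift (E := @torusE R n.+1) f0.
Lemma f1E s : f1 (tpi s) = f0 s.
Proof. exact: (qliftE (@torusE_refl R n.+1) f0_tor). Qed.
Lemma f1_cont : continuous f1.
Proof. exact: (qlift_cont (@torusE_refl R n.+1) f0_tor f0_cont). Qed.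

Definition f2 (p : PTT) : pinched a b lam B := qpi YE (p.1, f1 p.2).
Lemma f2_cont : continuous f2.
Proof.
move=> p; apply: (@continuous_comp _ _ _ (fun p : PTT => (p.1, f1 p.2)) (qpi YE)).
  exact: (@pair_cont _ _ _ f1 (@f1_cont) p).
exact: qpi_cont.
Qed.
Lemma f2_inv p q : relX lam p q -> f2 p = f2 q.
Proof.
case: p q => [x tp] [y tq] [/= e [s [t [hs ht hst]]]].
have exy : x = y by exact: val_inj.
subst y tp tq; rewrite /f2 /= !f1E.
apply: (qpi_eq (@YE_sym) (@YE_trans)); split => //=.
have [hY|hY] := pselect (Ynon a b lam B (set_val x)); first by right.
left; rewrite /f0; congr ecirc; congr (_ * _).
apply/eqP; rewrite -subr_eq0 -kapB; apply/eqP.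
exact: span_kap (nYnon_special hY) hst.
Qed.

Definition f3 := qlift (E := relX lam) f2.
Lemma f3E x s : f3 (xp x s) = qpi YE (x, f0 s).
Proof. by rewrite /f3 (qliftE (@relX_refl) f2_inv) /f2 /= f1E. Qed.
Lemma f3_cont : continuous f3.
Proof. exact: (qlift_cont (@relX_refl) f2_inv f2_cont). Qed.
Lemma f3_inv p q : OE p q -> f3 p = f3 q.
Proof.
case=> c [x [s [-> ->]]]; rewrite !f3E /f0 kapD (kapB0 hcol) addr0 //.
Qed.

Definition FF := qlift (E := OE) f3.
Lemma FFE x s : FF (qO (xp x s)) = qpi YE (x, f0 s).
Proof. by rewrite /FF (qliftE OE_refl f3_inv) f3E. Qed.
Lemma FF_cont : continuous FF.
Proof. exact: (qlift_cont OE_refl f3_inv f3_cont). Qed.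

Notation vv := (vR R v0).
Notation CC := (set_type (@circle R)).

Lemma tpi_ecirc (t1 t2 : R) : ecirc t1 = ecirc t2 ->
  tpi ((t1 / tau R) *: vv) = tpi ((t2 / tau R) *: vv).
Proof.
move/ecirc_inj => [k hk]; apply: tpi_eq; exists (k *: v0).
rewrite vRZ -scalerBl -mulrBl hk mulfK //; exact: tau_neq0.
Qed.

Definition g0 (w : CC) : torus R n.+1 := tpi ((ang w / tau R) *: vv).

Lemma val_cont (Z : topologicalType) (A : set Z) : continuous (set_val : set_type A -> Z).
Proof. by apply/continuousP => V oV; exists V. Qed.

Lemma oppP_cont : continuous (fun p : R * R => - p).
Proof. exact: opp_continuous. Qed.

Lemma scal_cont (f : CC -> R) (w : CC) : {for w, continuous f} ->
  {for w, continuous (fun w => tpi ((f w / tau R) *: vv))}.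
Proof.
move=> cf.
have h1 : {for w, continuous (fun w => (f w / tau R) *: vv)}.
  apply: continuousZr_tmp.
  exact: (continuousM cf (@cst_continuous _ _ ((tau R)^-1) w)).
exact: (continuous_comp h1 (@qpi_cont _ _ _)).
Qed.

Lemma g0_cont : continuous g0.
Proof.
move=> w.
have [e|e] := eqVneq (set_val w).1 (-1).
  apply: (@cont_loc _ _ g0 (fun w => tpi (((alpha1 (- set_val w) + pi) / tau R) *: vv)) w
     [set w : CC | (set_val w).1 != 1]).
  - exact: open_fst_neq.
  - by rewrite /= e -subr_eq0 -opprD oppr_eq0.
  - move=> y hy; apply: tpi_ecirc; rewrite angE alpha2E //.
  apply: scal_cont; apply: continuousD; last exact: cst_continuous.
  apply: (@continuous_comp _ _ _ (fun w : CC => - set_val w) (@alpha1 R)).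
    exact: (@continuous_comp _ _ _ set_val (fun p : R * R => - p) w (@val_cont _ _ w) (@oppP_cont _)).
  by apply: alpha1_cont; rewrite /= e opprK.
apply: (@cont_loc _ _ g0 (fun w => tpi ((alpha1 (set_val w) / tau R) *: vv)) w
     [set w : CC | (set_val w).1 != -1]).
- exact: open_fst_neq.
- exact: e.
- by move=> y /= hy; rewrite /g0 /ang (negPf hy).
apply: scal_cont.
apply: (@continuous_comp _ _ _ set_val (@alpha1 R) w (@val_cont _ _ w)).
by apply: alpha1_cont; rewrite addrC addr_eq0.
Qed.

Lemma qO_Ynon (x : PP) s t : Ynon a b lam B (set_val x) -> qO (xp x s) = qO (xp x t).
Proof.
move=> /Ynon_facet [i [hi ns]].
have k0 : kp (vR R (lam i)) != 0.
  apply/negP => /eqP /(kap0 hcol hv hrk) [c hc]; apply: ns; by exists c.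
pose k := kp (t - s) / kp (vR R (lam i)).
have [c hc] : exists c, t - s - k *: vR R (lam i) = c *m BB.
  apply: (kap0 hcol hv hrk); rewrite kapB kapZ /k divfK // subrr //.
rewrite (qpi_eq OE_sym OE_trans (x := xp x s) (y := xp x (s + c *m BB))); last first.
  by exists c, x, s.
congr qO; apply: xpi_span.
rewrite -hc [t - s]addrC -!addrA addNKr addrC addrNK -scaleNr.
exact: span_facet.
Qed.

Definition g1 (p : PSS) : QQ := qO (qpi (relX lam) (p.1, g0 p.2)).
Lemma g1_cont : continuous g1.
Proof.
move=> p.
have h1 := (@pair_cont _ _ _ g0 (@g0_cont) p).
have h2 := continuous_comp h1 (@qpi_cont _ (relX lam) _).
exact: (continuous_comp h2 (@qpi_cont _ OE _)).
Qed.
Lemma g1_inv p q : YE p q -> g1 p = g1 q.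
Proof.
case: p q => [x w] [y w'] [/= e h].
have exy : x = y by exact: val_inj.
subst y; case: h => [-> //|hY].
exact: qO_Ynon.
Qed.

Definition GG := qlift (E := YE) g1.
Lemma GG_cont : continuous GG.
Proof. exact: (qlift_cont YE_refl g1_inv g1_cont). Qed.
Lemma GGE x w : GG (qpi YE (x, w)) = qO (xp x ((ang w / tau R) *: vv)).
Proof. by rewrite /GG (qliftE YE_refl g1_inv). Qed.

Lemma FG y : FF (GG y) = y.
Proof.
have [[x w] ->] := qpi_surj y.
rewrite GGE FFE; congr (qpi YE (x, _)).
by rewrite /f0 kapZ (@kapv R _ _ _ hv) mulr1 divfK ?angE //; exact: tau_neq0.
Qed.

Lemma GF q : GG (FF q) = q.
Proof.
have [p ->] := qpi_surj q; have [x [s ->]] := xpi_surj p.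
rewrite FFE GGE.
rewrite (xpi_tpi _ (tpi_ecirc (angE (f0 s)))).
have -> : kp s * tau R / tau R = kp s by rewrite mulfK //; exact: tau_neq0.
have [c hc] : exists c, kp s *: vv - s = c *m BB.
  by apply: (kap0 hcol hv hrk); rewrite kapB kapZ (@kapv R _ _ _ hv) mulr1 subrr.
symmetry; rewrite (qpi_eq OE_sym OE_trans (x := xp x s) (y := xp x (s + c *m BB))).
  by rewrite -hc addrC subrK.
by exists c, x, s.
Qed.

Lemma main_homeo : homeomorphic (orbit_space a b lam B) (pinched a b lam B).
Proof.
exists FF, GG; split.
- exact: FF_cont.
- exact: GG_cont.
- exact: GF.
- exact: FG.
Qed.
End Main.
Unset Implicit Arguments.

Theorem lemma2p6 (R : realType) (n m : nat)
  (a : 'I_m -> 'rV[R]_n) (b : 'I_m -> R)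
  (lam : 'I_m -> 'rV[int]_n) (B : 'M[int]_(n.-1, n)) :
  (0 < n)%N ->
  simple_polytope a b ->
  char_fun a b lam ->
  \rank (intmx R B) = n.-1 ->
  connected_stabilizers a b lam B ->
  homeomorphic (orbit_space a b lam B) (pinched a b lam B).
Proof.
case: n a b lam B => [//|n] a b lam B _ hsimple _ hrk _.
have [L _ [U Uu [d _ hB]]] := int_Smith_normal_form B.
pose Ui := invmx U; pose v0 := row ord_max U.
have hcol : forall i, (B *m Ui) i ord_max = 0.
  move=> i; rewrite hB mulmxK // mxE big1 // => k _; rewrite mxE.
  by rewrite /= (ltn_eqF (ltn_ord k)) mulr0n mulr0.
have hv : (v0 *m Ui) 0 ord_max = 1.
  by rewrite -row_mul mulmxV // !mxE eqxx.
have hint : exists x0, forall i, dotv (a i) x0 < b i.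
  by case: hsimple => _ [x0 hx0] _ _; exists x0.
exact: main_homeo hcol hv hrk hint.
Qed.
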